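(* Let $S\subseteq\mathbb{F}_2^{27}$ be the linear subspace spanned by the six vectors (written as bit strings, coordinate $1$ leftmost, coordinate $27$ rightmost) $\xi^1 = 100010001010101010100011110$, $\xi^2 = 101010111001100000001010101$, $\xi^3 = 011001100111100111100110011$, $\xi^4 = 000111100000011001100001111$, $\xi^5 = 000000011111111000011111111$, $\xi^6 = 000000000000000111111111111$, and let $Q:\mathbb{F}_2^{27}\to\mathbb{F}_2$ be the quadratic form $Q(x)= x_{1}x_{2} + x_{1}x_{3} + x_{1}x_{8} + x_{2}x_{4} + x_{2}x_{8} + x_{2}x_{16} + x_{3}x_{4} + x_{3}x_{8} + x_{3}x_{16} + x_{4}x_{8} + x_{8}x_{16}$ (arithmetic mod $2$). Define the (normalized) 27-qubit states $|S\rangle = \frac{1}{\sqrt{|S|}}\sum_{x\in S}|x\rangle$ and $|Q,S\rangle=\frac{1}{\sqrt{|S|}}\sum_{x\in S}(-1)^{Q(x)}|x\rangle$. Then $|S\rangle$ and $|Q,S\rangle$ are stabilizer states which are local unitary (LU) equivalent but not local Clifford (LC) equivalent. In particular, the LU-LC conjecture (every two LU equivalent stabilizer states are LC equivalent) is false.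
   Context: Pauli matrices $X,Y,Z$; the Pauli group $\mathcal{G}$ is generated by them. An $n$-qubit stabilizer state is the unique common $+1$ eigenvector of an Abelian subgroup of $\mathcal{G}^{\otimes n}$ of cardinality $2^n$ not containing $-I^{\otimes n}$. A single-qubit Clifford operator is a $2\times 2$ unitary $U$ with $U\mathcal{G}U^\dagger=\mathcal{G}$. Two $n$-qubit states $|\psi_0\rangle,|\psi_1\rangle$ are LU equivalent if $\bigotimes_{j=1}^n U_j|\psi_0\rangle=|\psi_1\rangle$ for some single-qubit unitaries $U_j$, and LC equivalent if this holds with all $U_j$ Clifford operators. $|x\rangle$ denotes the computational basis state labelled by $x\in\mathbb{F}_2^{27}$. *)

(* Defs.v *)
From HB Require Import structures.
From mathcomp Require Import all_boot all_order all_algebra.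
From mathcomp Require Import complex Rstruct.
Set Implicit Arguments.
Unset Strict Implicit.
Unset Printing Implicit Defensive.
Import Order.TTheory GRing.Theory Num.Theory.
Local Open Scope ring_scope.

Definition C : numClosedFieldType := (Rdefinitions.R)[i].

(* Basis of C^2 is indexed by 'I_2 (index 0 = |0>, index 1 = |1>). *)
Definition adjoint (U : 'M[C]_2) : 'M[C]_2 := (map_mx Num.conj U)^T.

Definition unitary2 (U : 'M[C]_2) : Prop := U *m adjoint U = 1%:M.

Definition pauliX : 'M[C]_2 := \matrix_(i < 2, j < 2) (if i != j then 1 else 0).
Definition pauliY : 'M[C]_2 :=
  \matrix_(i < 2, j < 2)
    (if (i == 0) && (j == 1) then - 'i else if (i == 1) && (j == 0) then 'i else 0).
Definition pauliZ : 'M[C]_2 :=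
  \matrix_(i < 2, j < 2) (if i == j then (if i == 0 then 1 else -1) else 0).

(* The single-qubit Pauli group: the group generated by X, Y, Z
   (every element has finite order, so closure under products suffices). *)
Inductive pauli_group : 'M[C]_2 -> Prop :=
| pauli_X : pauli_group pauliX
| pauli_Y : pauli_group pauliY
| pauli_Z : pauli_group pauliZ
| pauli_mul : forall A B, pauli_group A -> pauli_group B -> pauli_group (A *m B).

Definition clifford2 (U : 'M[C]_2) : Prop :=
  unitary2 U /\
  (forall P, pauli_group P -> pauli_group (U *m P *m adjoint U)) /\
  (forall P', pauli_group P' -> exists2 P, pauli_group P & P' = U *m P *m adjoint U).

Definition label (n : nat) := {ffun 'I_n -> 'I_2}.

(* An n-qubit (unnormalized) vector of C^(2^n) = C^(label n). *)
Definition state (n : nat) := label n -> C.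

(* An n-qubit operator, given by its matrix entries <x|A|y>. *)
Definition op (n : nat) := {ffun label n -> {ffun label n -> C}}.

Definition op_apply n (A : op n) (psi : state n) : state n :=
  fun x => \sum_(y : label n) A x y * psi y.

Definition op_mul n (A B : op n) : op n :=
  [ffun x : label n => [ffun z : label n => \sum_(y : label n) A x y * B y z]].

Definition op_id n : op n := [ffun x : label n => [ffun y : label n => if x == y then 1 else 0]].

Definition op_scale n (c : C) (A : op n) : op n := [ffun x : label n => [ffun y : label n => c * A x y]].

Definition tensor n (U : 'I_n -> 'M[C]_2) : op n :=
  [ffun x : label n => [ffun y : label n => \prod_(j < n) U j (x j) (y j)]].

Definition pauli_n n (A : op n) : Prop :=
  exists P : 'I_n -> 'M[C]_2, (forall j, pauli_group (P j)) /\ A = tensor P.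

(* Stabilizer state: the unique (up to scalar) common +1 eigenvector of an
   Abelian subgroup (listed without repetition by the sequence G) of G^{(x) n}
   of cardinality 2^n not containing -I. *)
Definition stabilizer_state n (psi : state n) : Prop :=
  exists G : seq (op n),
    (uniq G /\ size G = (2 ^ n)%N /\
     (forall A, A \in G -> pauli_n A) /\
     op_id n \in G /\
     (forall A B, A \in G -> B \in G -> op_mul A B \in G) /\
     (forall A, A \in G -> exists2 B, B \in G & op_mul A B = op_id n) /\
     (forall A B, A \in G -> B \in G -> op_mul A B = op_mul B A) /\
     op_scale (-1) (op_id n) \notin G) /\
    [/\ psi <> (fun _ => 0),
        (forall A, A \in G -> op_apply A psi = psi) &
        (forall phi : state n, (forall A, A \in G -> op_apply A phi = phi) ->
           exists c : C, phi = (fun x => c * psi x))].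

Definition LU_equiv n (psi0 psi1 : state n) : Prop :=
  exists U : 'I_n -> 'M[C]_2, (forall j, unitary2 (U j)) /\ op_apply (tensor U) psi0 = psi1.

Definition LC_equiv n (psi0 psi1 : state n) : Prop :=
  exists U : 'I_n -> 'M[C]_2, (forall j, clifford2 (U j)) /\ op_apply (tensor U) psi0 = psi1.

(* Generators xi^1..xi^6, bit strings with coordinate 1 leftmost. *)
Definition xi_rows : seq (seq nat) :=
  [:: [:: 1;0;0;0;1;0;0;0;1;0;1;0;1;0;1;0;1;0;1;0;0;0;1;1;1;1;0];
      [:: 1;0;1;0;1;0;1;1;1;0;0;1;1;0;0;0;0;0;0;0;1;0;1;0;1;0;1];
      [:: 0;1;1;0;0;1;1;0;0;1;1;1;1;0;0;1;1;1;1;0;0;1;1;0;0;1;1];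
      [:: 0;0;0;1;1;1;1;0;0;0;0;0;0;1;1;0;0;1;1;0;0;0;0;1;1;1;1];
      [:: 0;0;0;0;0;0;0;1;1;1;1;1;1;1;1;0;0;0;0;1;1;1;1;1;1;1;1];
      [:: 0;0;0;0;0;0;0;0;0;0;0;0;0;0;0;1;1;1;1;1;1;1;1;1;1;1;1] ].

(* xi i j = j-th coordinate (0-based) of xi^(i+1). *)
Definition xi (i : 'I_6) (j : 'I_27) : 'I_2 :=
  inZp (nth 0%N (nth [::] xi_rows i) j).

Definition S27 : {set label 27} :=
  [set x : label 27 | [exists c : {ffun 'I_6 -> 'I_2},
                        [forall j : 'I_27, x j == \sum_(i < 6) c i * xi i j]]].

(* Coordinate x_k (1-based, as in the paper). *)
Definition coord (x : label 27) (k : nat) : 'I_2 := x (inZp k.-1).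

Definition Q27 (x : label 27) : 'I_2 :=
  let c := coord x in
  c 1%N * c 2%N + c 1%N * c 3%N + c 1%N * c 8%N + c 2%N * c 4%N + c 2%N * c 8%N
  + c 2%N * c 16%N + c 3%N * c 4%N + c 3%N * c 8%N + c 3%N * c 16%N
  + c 4%N * c 8%N + c 8%N * c 16%N.

Definition ket_S : state 27 :=
  fun x => if x \in S27 then (sqrtC (#|S27|%:R : C))^-1 else 0.

Definition ket_QS : state 27 :=
  fun x => if x \in S27 then (-1) ^+ (nat_of_ord (Q27 x)) * (sqrtC (#|S27|%:R : C))^-1
           else 0.

(* Main.v *)
Require Import Defs.
From HB Require Import structures.
From mathcomp Require Import all_boot all_order all_algebra.
From mathcomp Require Import complex Rstruct.
From mathcomp Require Import ring.
From Stdlib Require Import FunctionalExtensionality.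
Import Order.TTheory GRing.Theory Num.Theory.
Local Open Scope ring_scope.
Set Implicit Arguments.
Unset Strict Implicit.
Unset Printing Implicit Defensive.

Definition ladd n (x y : label n) : label n := [ffun j => x j + y j].

Lemma ladd_lab0 n (x : label n) : ladd x [ffun _ => 0] = x.
Proof. by apply/ffunP => j; rewrite !ffunE addr0. Qed.

Lemma apply_shift n (U : 'I_n -> 'M[C]_2) (t : label n) (psi : state n) x :
  (forall j (r c : 'I_2), c != r + t j -> U j r c = 0) ->
  op_apply (tensor U) psi x = (\prod_j U j (x j) (x j + t j)) * psi (ladd x t).
Proof.
move=> HU; rewrite /op_apply (bigD1 (ladd x t)) //= big1 ?addr0.
  by rewrite /tensor !ffunE; congr (_ * _); apply: eq_bigr => j _; rewrite ffunE.
move=> y Hy; rewrite /tensor !ffunE.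
have [j Hj]: exists j, y j != x j + t j.
  apply/existsP; rewrite -negb_forall; apply: contra Hy => /forallP H.
  by apply/eqP/ffunP => j; rewrite ffunE; apply/eqP/H.
by rewrite (bigD1 j) //= HU // mul0r mul0r.
Qed.

Lemma tensor_mul n (A B : 'I_n -> 'M[C]_2) :
  op_mul (tensor A) (tensor B) = tensor (fun j => A j *m B j).
Proof.
apply/ffunP => x; apply/ffunP => z; rewrite /op_mul /tensor !ffunE.
transitivity (\prod_(j < n) \sum_(k < 2) A j (x j) k * B j k (z j)); last first.
  by apply: eq_bigr => j _; rewrite mxE.
rewrite bigA_distr_bigA /=; apply: eq_bigr => y _.
by rewrite !ffunE -big_split /=.
Qed.

Lemma apply_mul n (A B : op n) psi :
  op_apply (op_mul A B) psi = op_apply A (op_apply B psi).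
Proof.
rewrite /op_apply /op_mul; apply: FunctionalExtensionality.functional_extensionality => x.
under eq_bigr => y _ do rewrite !ffunE big_distrl /=.
rewrite exchange_big /=; apply: eq_bigr => y _.
by rewrite big_distrr /=; apply: eq_bigr => z _; rewrite mulrA.
Qed.

Definition pmono (P : 'M[C]_2) := exists s : 'I_2,
  forall r c : 'I_2, if c == r + s then P r c ^+ 4 = 1 else P r c = 0.

Lemma I2_cases (r : 'I_2) : r = 0 \/ r = 1.
Proof. by case: r => [[|[|//]] Hr]; [left|right]; apply: val_inj. Qed.

Lemma sqrCi' : ('i : C) ^+ 2 = -1.
Proof. exact: sqrCi. Qed.

Lemma i4 : ('i : C) ^+ 4 = 1.
Proof. by rewrite (_ : 4 = 2 * 2)%N // exprM sqrCi' expr2 mulrNN mulr1. Qed.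

Lemma pmonoX : pmono pauliX.
Proof.
exists 1 => r c; rewrite mxE.
by case: (I2_cases r) => ->; case: (I2_cases c) => -> /=; rewrite ?expr1n.
Qed.

Lemma pmonoY : pmono pauliY.
Proof.
exists 1 => r c; rewrite mxE.
case: (I2_cases r) => ->; case: (I2_cases c) => -> //=.
  by rewrite -mulN1r exprMn i4 mulr1 -signr_odd.
by rewrite i4.
Qed.

Lemma pmonoZ : pmono pauliZ.
Proof.
exists 0 => r c; rewrite mxE.
case: (I2_cases r) => ->; case: (I2_cases c) => -> //=; rewrite ?expr1n //.
by rewrite -signr_odd.
Qed.

Lemma pmono_mul A B : pmono A -> pmono B -> pmono (A *m B).
Proof.
move=> [s1 HA] [s2 HB]; exists (s1 + s2) => r c; rewrite mxE.
rewrite (bigD1 (r + s1)) //= big1 ?addr0; last first.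
  by move=> k Hk; move: (HA r k); rewrite (negPf Hk) => ->; rewrite mul0r.
move: (HA r (r + s1)); rewrite eqxx => HA1.
move: (HB (r + s1) c); rewrite -addrA.
by case: (c == r + (s1 + s2)) => [HB1|->]; rewrite ?mulr0 // exprMn HA1 HB1 mulr1.
Qed.

Lemma pauli_pmono P : pauli_group P -> pmono P.
Proof.
elim=> [|||A B _ HA _ HB]; [exact pmonoX|exact pmonoY|exact pmonoZ|].
exact: pmono_mul.
Qed.

Definition sgn (t : 'I_2) : C := (-1) ^+ (val t).

Lemma two2 (t : 'I_2) : t + t = 0.
Proof. by case: (I2_cases t) => ->; apply: val_inj. Qed.

Lemma sgnD s t : sgn (s + t) = sgn s * sgn t.
Proof.
rewrite /sgn -exprD; have H : ((-1 : C) ^+ 2 = 1) by rewrite expr2 mulrNN mulr1.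
by rewrite -(expr_mod _ H).
Qed.

Lemma sgn0 : sgn 0 = 1. Proof. by rewrite /sgn expr0. Qed.
Lemma sgn1 : sgn 1 = -1. Proof. by rewrite /sgn expr1. Qed.

Lemma sgn_sum n (F : 'I_n -> 'I_2) : sgn (\sum_(j < n) F j) = \prod_(j < n) sgn (F j).
Proof.
elim: n F => [|n IH] F; first by rewrite !big_ord0 sgn0.
by rewrite !big_ord_recr sgnD IH.
Qed.

Lemma sgn_eq1 t : (sgn t == 1) = (t == 0).
Proof.
case: (I2_cases t) => ->; rewrite ?sgn0 ?sgn1 ?eqxx //.
apply/negbTE/eqP => H; have: (1 + 1 : C) == 0 by rewrite -{1}H addNr.
by rewrite -(natrD C 1 1) pnatr_eq0.
Qed.

Lemma sgn_neq0 t : sgn t != 0.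
Proof. by rewrite /sgn expf_neq0 // oppr_eq0 oner_eq0. Qed.

Lemma sgnK t : sgn t * sgn t = 1.
Proof. by rewrite -sgnD two2 sgn0. Qed.

Definition dot n (x y : label n) : 'I_2 := \sum_(j < n) x j * y j.

Definition pm (a b : 'I_2) : 'M[C]_2 :=
  \matrix_(r, c) (if c == r + a then sgn (b * c) else 0).

Lemma pm_shift a b (r c : 'I_2) : c != r + a -> pm a b r c = 0.
Proof. by rewrite mxE => /negPf ->. Qed.

Lemma apply_pm n (a z : label n) (psi : state n) x :
  op_apply (tensor (fun j => pm (a j) (z j))) psi x
  = sgn (dot z (ladd x a)) * psi (ladd x a).
Proof.
rewrite (@apply_shift _ _ a) ?sgn_sum; last by move=> j r c; apply: pm_shift.
congr (_ * _); apply: eq_bigr => j _; rewrite mxE eqxx ffunE; congr sgn; ring.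
Qed.

Lemma pm_mul a b a' b' :
  pm a b *m pm a' b' = sgn (b * a') *: pm (a + a') (b + b').
Proof.
apply/matrixP => r c; rewrite !mxE (bigD1 (r + a)) //= big1 ?addr0; last first.
  by move=> k Hk; rewrite !mxE (negPf Hk) mul0r.
rewrite !mxE eqxx -addrA.
case: eqP => [->|_]; last by rewrite !mulr0.
rewrite -!sgnD; congr sgn.
transitivity (b * (r + a) + b' * (r + (a + a')) + (b * a' + b * a')).
  by rewrite two2 addr0.
ring.
Qed.

Lemma pauli_I : pauli_group 1%:M.
Proof.
have ->: (1%:M : 'M[C]_2) = pauliX *m pauliX.
  apply/matrixP => r c; rewrite !mxE (bigD1 (r + 1)) //= big1 ?addr0; last first.
    move=> k Hk; rewrite !mxE; case: (I2_cases r) Hk => -> Hk;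
      case: (I2_cases k) Hk => -> //=; by rewrite mul0r.
  by rewrite !mxE; case: (I2_cases r) => ->; case: (I2_cases c) => -> /=; rewrite ?mulr1 ?mulr0 //.
by apply: pauli_mul; apply: pauli_X.
Qed.

Definition lin (c : {ffun 'I_6 -> 'I_2}) : label 27 :=
  [ffun j => \sum_(i < 6) c i * xi i j].

Definition rowN (i j : nat) : nat := nth 0%N (nth [::] xi_rows i) j.
Definition linN (bs : seq nat) (j : nat) : nat :=
  ((\sum_(0 <= k < 6) nth 0%N bs k * rowN k j) %% 2)%N.
Definition bitsOf (c : {ffun 'I_6 -> 'I_2}) : seq nat :=
  [seq val (c (inZp k)) | k <- iota 0 6].
Fixpoint bitsl (n : nat) : seq (seq nat) :=
  if n is m.+1 then [seq 0%N :: l | l <- bitsl m] ++ [seq 1%N :: l | l <- bitsl m]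
  else [:: [::]].
Definition allbits6 := bitsl 6.

Lemma valD2 (a b : 'I_2) : val (a + b) = ((val a + val b) %% 2)%N.
Proof. by []. Qed.
Lemma valM2 (a b : 'I_2) : val (a * b) = ((val a * val b) %% 2)%N.
Proof. by []. Qed.
Lemma val0_2 : val (0 : 'I_2) = 0%N. Proof. by []. Qed.

Lemma val_sum2 n (F : 'I_n -> 'I_2) :
  val (\sum_(i < n) F i) = ((\sum_(i < n) val (F i)) %% 2)%N.
Proof.
elim: n F => [|n IH] F; first by rewrite !big_ord0.
by rewrite !big_ord_recr valD2 IH modnDml.
Qed.

Lemma rowN_lt2 i j : (rowN i j < 2)%N.
Proof.
rewrite /rowN.
have H: all (fun r => all (fun b => b < 2)%N r) xi_rows by [].
have [Hi|Hi] := ltnP i (size xi_rows); last by rewrite (nth_default [::] Hi) nth_nil.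
have: all (fun b => b < 2)%N (nth [::] xi_rows i) by exact: (allP H _ (mem_nth [::] Hi)).
move=> Hr; have [Hj|Hj] := ltnP j (size (nth [::] xi_rows i)); last by rewrite (nth_default 0%N Hj).
exact: (allP Hr _ (mem_nth 0%N Hj)).
Qed.

Lemma val_lin c j : val (lin c j) = linN (bitsOf c) (val j).
Proof.
rewrite ffunE val_sum2 /linN big_mkord; congr (_ %% 2)%N.
apply: eq_bigr => i _; rewrite valM2 /bitsOf (nth_map 0%N); last by rewrite size_iota.
rewrite nth_iota // add0n.
have ->: (inZp i : 'I_6) = i by apply: val_inj; rewrite /= modn_small.
have Hx: val (xi i j) = rowN i j by rewrite /= modn_small // rowN_lt2.
rewrite Hx modn_small //.
have := rowN_lt2 i j; case: (rowN i j) => [|[|//]] _; case: (c i) => [[|[|//]] ?] //.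
Qed.

Lemma bitsl_in n (l : seq nat) : size l = n -> all (fun b => b < 2)%N l -> l \in bitsl n.
Proof.
elim: n l => [|n IH] [|b l] //= [Hs] /andP [Hb Hl].
rewrite mem_cat; case: b Hb => [|[|//]] _.
  by rewrite mem_map ?IH // => x y [].
by rewrite orbC mem_map ?IH // => x y [].
Qed.

Lemma bitsOf_in c : bitsOf c \in allbits6.
Proof.
apply: bitsl_in; first by rewrite size_map size_iota.
by apply/allP => b /mapP [k _ ->]; exact: ltn_ord.
Qed.

Lemma inS x : (x \in S27) <-> exists c, x = lin c.
Proof.
rewrite inE; split.
  move=> /existsP [c /forallP H]; exists c; apply/ffunP => j.
  by rewrite ffunE; apply/eqP/H.
move=> [c ->]; apply/existsP; exists c; apply/forallP => j; by rewrite ffunE.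
Qed.

Lemma lin_in c : lin c \in S27.
Proof. by apply/inS; exists c. Qed.

Definition Icoords : seq nat := [:: 0;1;3;7;15;19]%N.
Definition pivs : seq nat :=
  [:: 2;4;5;6;8;9;10;11;12;13;14;16;17;18;20;21;22;23;24;25;26]%N.
Definition xpN : seq (seq nat) := [:: [:: 1;0;0;0;1;0;0;0;1;0;1;0;1;0;1;0;1;0;1;0;0;0;1;1;1;1;0];
  [:: 0;1;0;0;0;1;0;0;1;0;1;1;0;1;0;0;1;0;1;0;1;1;1;1;0;0;0];
  [:: 0;0;0;1;1;1;1;0;0;0;0;0;0;1;1;0;0;1;1;0;0;0;0;1;1;1;1];
  [:: 0;0;1;0;0;0;1;1;0;0;1;1;0;0;1;0;1;0;1;0;1;0;0;1;0;1;1];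
  [:: 0;0;1;0;0;0;1;0;1;1;0;0;1;1;0;1;0;1;0;0;1;0;0;1;0;1;1];
  [:: 0;0;1;0;0;0;1;0;1;1;0;0;1;1;0;0;1;0;1;1;0;1;1;0;1;0;0] ]%N.

Definition hvN (p j : nat) : nat :=
  if j == p then 1%N else if j \in Icoords then nth 0%N (nth [::] xpN (index j Icoords)) p
  else 0%N.

Definition hv (k : 'I_21) : label 27 := [ffun j => inZp (hvN (nth 0%N pivs k) (val j))].

Definition cfb (bs : seq nat) : {ffun 'I_6 -> 'I_2} := [ffun i : 'I_6 => inZp (nth 0%N bs (val i))].

Lemma bitsOf_cfb bs : bitsOf (cfb bs) = [seq (nth 0%N bs k %% 2)%N | k <- iota 0 6].
Proof.
apply/eq_in_map => k; rewrite mem_iota => /andP [_ Hk].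
by rewrite ffunE /= (modn_small Hk).
Qed.

Lemma val_dot27 (x y : label 27) (f g : nat -> nat) :
  (forall j, val (x j) = f (val j)) -> (forall j, val (y j) = g (val j)) ->
  val (dot x y) = ((\sum_(0 <= j < 27) f j * g j) %% 2)%N.
Proof.
move=> Hx Hy; rewrite /dot val_sum2.
have E : (\sum_(i < 27) val (x i * y i)%R = \sum_(i < 27) ((f i * g i) %% 2))%N.
  by apply: eq_bigr => i _; rewrite -Hx -Hy.
by rewrite E -modn_summ big_mkord.
Qed.

Lemma val_hv k j : val (hv k j) = (hvN (nth 0%N pivs k) (val j) %% 2)%N.
Proof. by rewrite ffunE. Qed.

Definition QN (v : nat -> nat) : nat :=
  let c k := v k.-1 in
  ((((((((((((c 1 * c 2) %% 2 + (c 1 * c 3) %% 2) %% 2 + (c 1 * c 8) %% 2) %% 2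
  + (c 2 * c 4) %% 2) %% 2 + (c 2 * c 8) %% 2) %% 2
  + (c 2 * c 16) %% 2) %% 2 + (c 3 * c 4) %% 2) %% 2 + (c 3 * c 8) %% 2) %% 2
  + (c 3 * c 16) %% 2) %% 2
  + (c 4 * c 8) %% 2) %% 2 + (c 8 * c 16) %% 2) %% 2)%N.

Lemma val_Q27 x : val (Q27 x) = QN (fun k => val (x (inZp k))).
Proof. by []. Qed.

Definition certL : seq (seq nat * nat) :=
[:: ([:: 0;0;0;0;0;1], 1);
 ([:: 0;0;0;0;1;0], 1);
 ([:: 0;0;0;0;1;1], 2);
 ([:: 0;0;0;1;0;0], 3);
 ([:: 0;0;0;1;1;0], 1);
 ([:: 0;0;1;0;0;0], 1);
 ([:: 0;0;1;0;0;1], 3);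
 ([:: 0;0;1;0;1;0], 1);
 ([:: 0;1;0;0;0;0], 2);
 ([:: 0;1;0;0;0;1], 1);
 ([:: 0;1;1;0;0;0], 3);
 ([:: 1;0;0;0;0;0], 2);
 ([:: 1;0;0;0;0;1], 3);
 ([:: 1;0;0;0;1;0], 1)]%N.

Definition bsn (bs : seq nat) := [seq (nth 0%N bs k %% 2)%N | k <- iota 0 6].

Lemma check_orth : all (fun bs => all (fun k =>
   ((\sum_(0 <= j < 27) (hvN (nth 0%N pivs k) j %% 2) * linN bs j) %% 2 == 0)%N)
   (iota 0 21)) allbits6.
Proof. rewrite /linN unlock. vm_compute. reflexivity. Qed.

Lemma check_supp : all (fun bs => all (fun k =>
   (all (fun j => (hvN (nth 0%N pivs k) j %% 2 == 0)%N ==> (linN bs j == 0%N)) (iota 0 27))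
   ==> all (fun j => linN bs j == 0%N) (iota 0 27)) (iota 0 21)) allbits6.
Proof. rewrite /linN unlock. vm_compute. reflexivity. Qed.

Lemma check_cover : all (fun j => has (fun k => (hvN (nth 0%N pivs k) j %% 2 == 1)%N)
   (iota 0 21)) (iota 0 27).
Proof. vm_compute. reflexivity. Qed.

Lemma check_cert1 : odd (\sum_(p <- certL) QN (fun k => linN (bsn p.1) (k %% 27)) * p.2).
Proof. rewrite /linN unlock. vm_compute. reflexivity. Qed.

Lemma check_cert2 : all (fun j => ((\sum_(p <- certL) p.2 * linN (bsn p.1) j) %% 4 == 0)%N)
  (iota 0 27).
Proof. rewrite /linN unlock. vm_compute. reflexivity. Qed.

Lemma check_lininj : all (fun bs => all (fun bs' =>
   (all (fun j => linN bs j == linN bs' j) (iota 0 27)) ==> (bs == bs')) allbits6) allbits6.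
Proof. rewrite /linN unlock. vm_compute. reflexivity. Qed.

Lemma check_piv : all (fun k => all (fun k' =>
   (hvN (nth 0%N pivs k') (nth 0%N pivs k) %% 2 == (k == k'))%N) (iota 0 21)) (iota 0 21).
Proof. vm_compute. reflexivity. Qed.

Lemma check_dec : all (fun v => has (fun bs => all (fun m =>
   linN (bsn bs) (nth 0%N Icoords m) == nth 0%N v m) (iota 0 6)) allbits6) allbits6.
Proof. rewrite /linN unlock. vm_compute. reflexivity. Qed.

Lemma check_part : all (fun j => (j \in Icoords) || (j \in pivs)) (iota 0 27).
Proof. vm_compute. reflexivity. Qed.

Lemma check_pivlt : all (fun k => nth 0%N pivs k < 27)%N (iota 0 21).
Proof. vm_compute. reflexivity. Qed.

Lemma check_Ilt : all (fun m => nth 0%N Icoords m < 27)%N (iota 0 6).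
Proof. vm_compute. reflexivity. Qed.

Lemma sum2 (F : 'I_2 -> C) : \sum_(k < 2) F k = F 0 + F 1.
Proof. by rewrite big_ord_recl big_ord1; congr (F _ + F _); apply: val_inj. Qed.

Lemma uinv U : unitary2 U -> adjoint U *m U = 1%:M.
Proof. exact: mulmx1C. Qed.

Lemma mulE (A B : 'M[C]_2) r c : (A *m B) r c = A r 0 * B 0 c + A r 1 * B 1 c.
Proof. by rewrite mxE sum2. Qed.

Lemma adjE (U : 'M[C]_2) r c : adjoint U r c = (U c r)^*.
Proof. by rewrite /adjoint !mxE. Qed.

Lemma oneNone : (1 : C) != -1.
Proof.
apply/eqP => H; have: (1 + 1 : C) == 0 by rewrite {2}H subrr.
by rewrite -(natrD C 1 1) pnatr_eq0.
Qed.

Lemma conj_eq0 (z : C) : (z^* == 0) = (z == 0).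
Proof. by rewrite -normr_eq0 norm_conjC normr_eq0. Qed.

Lemma diag_mono U :
  unitary2 U ->
  (forall r c : 'I_2, c != r -> (U *m pauliZ *m adjoint U) r c = 0) ->
  exists t : 'I_2, forall r c : 'I_2, if c == r + t then U r c != 0 else U r c == 0.
Proof.
move=> HU Hd; set W := U *m pauliZ *m adjoint U.
have HWU : W *m U = U *m pauliZ by rewrite /W -mulmxA uinv // mulmx1.
move: Hd; rewrite -/W => Hd; clearbody W.
have HA : forall r : 'I_2, ~ (U r 0 != 0 /\ U r 1 != 0).
  move=> r [H0 H1].
  have E c : W r r * U r c = U r c * pauliZ c c.
    move/matrixP: HWU => /(_ r c); rewrite !mxE (bigD1 r) //= big1 ?addr0; last first.
      by move=> k Hk; rewrite Hd // mul0r.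
    move=> ->; rewrite (bigD1 c) //= big1 ?addr0 ?mxE //.
    by move=> k Hk; rewrite mxE (negPf Hk) mulr0.
  move: (E 0) (E 1); rewrite !mxE /= mulr1 mulrN1 => E0 E1.
  have: W r r = 1 by apply: (mulIf H0); rewrite mul1r.
  have: W r r = -1 by apply: (mulIf H1); rewrite mulN1r.
  by move=> -> /eqP; rewrite eq_sym (negPf oneNone).
have HUU := HU; move/matrixP: HUU => HUU.
have HB : forall r : 'I_2, U r 0 != 0 \/ U r 1 != 0.
  move=> r; move: (HUU r r); rewrite mulE !adjE !mxE eqxx /=.
  case: eqVneq => [->|]; last by left.
  case: eqVneq => [->|]; last by right.
  by rewrite !mul0r addr0 => /eqP; rewrite eq_sym oner_eq0.
have HC : U 0 0 * (U 1 0)^* + U 0 1 * (U 1 1)^* = 0.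
  by move: (HUU 0 1); rewrite mulE !adjE !mxE.
have [h00|h00] := eqVneq (U 0 0) 0.
  have h01 : U 0 1 != 0 by case: (HB 0) => //; rewrite h00 eqxx.
  have h11 : U 1 1 = 0.
    by move: HC; rewrite h00 mul0r add0r => /eqP; rewrite mulf_eq0 (negPf h01) conj_eq0 => /eqP.
  have h10 : U 1 0 != 0 by case: (HB 1) => //; rewrite h11 eqxx.
  exists 1 => r c; case: (I2_cases r) => ->; case: (I2_cases c) => -> //=; by rewrite ?h00 ?h11 ?h01 ?h10 ?eqxx.
have h01 : U 0 1 = 0 by case: (eqVneq (U 0 1) 0) => // H; case: (HA 0 (conj h00 H)).
have h10 : U 1 0 = 0.
  by move: HC; rewrite h01 mul0r addr0 => /eqP; rewrite mulf_eq0 (negPf h00) conj_eq0 => /eqP.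
have h11 : U 1 1 != 0 by case: (HB 1) => //; rewrite h10 eqxx.
exists 0 => r c; case: (I2_cases r) => ->; case: (I2_cases c) => -> //=; by rewrite ?h00 ?h11 ?h01 ?h10 ?eqxx.
Qed.

Lemma x_ratio U (t : 'I_2) : clifford2 U ->
  (forall r c : 'I_2, if c == r + t then U r c != 0 else U r c == 0) ->
  exists w : C, w ^+ 4 = 1 /\ U 0 t = w * U 1 (1 + t).
Proof.
move=> [HU [Hcl _]] Hm.
have [s Hs] := pauli_pmono (Hcl _ pauli_X).
set W := U *m pauliX *m adjoint U in Hs.
have HWU : W *m U = U *m pauliX by rewrite /W -mulmxA uinv // mulmx1.
clearbody W.
move/matrixP: HWU => /(_ 0 (1 + t)); rewrite !mulE !mxE.
have E11 : (1 + 1 : 'I_2) = 0 by apply: val_inj.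
have Hs01 := Hs 0 1.
case: (I2_cases t) Hm => -> Hm; rewrite ?addr0 ?E11 /=.
- move: (Hm 0 1) (Hm 1 1) (Hm 0 0) => /= /eqP -> H11 H00; rewrite mulr0 add0r mulr0 addr0 mulr1.
  move=> E; exists (W 0 1); split; last by rewrite ?addr0 ?E11; exact: esym E.
  move: Hs01; case: (I2_cases s) => -> //= H.
  by move: H00; rewrite -E H mul0r eqxx.
- move: (Hm 0 0) (Hm 1 0) (Hm 0 1) => /= /eqP -> H10 H01; rewrite mulr0 add0r mul0r add0r mulr1.
  move=> E; exists (W 0 1); split; last by rewrite ?addr0 ?E11; exact: esym E.
  move: Hs01; case: (I2_cases s) => -> //= H.
  by move: H01; rewrite -E H mul0r eqxx.
Qed.

Definition z0 : label 27 := [ffun _ => 0].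

Lemma lin0 : lin [ffun _ => 0] = z0.
Proof. by apply/ffunP => j; rewrite !ffunE big1 // => i _; rewrite ffunE mul0r. Qed.

Lemma z0_in : z0 \in S27.
Proof. by rewrite -lin0 lin_in. Qed.

Lemma lin_add c c' : ladd (lin c) (lin c') = lin [ffun i => c i + c' i].
Proof.
apply/ffunP => j; rewrite !ffunE -big_split /=; apply: eq_bigr => i _.
by rewrite ffunE mulrDl.
Qed.

Lemma S_add x y : x \in S27 -> y \in S27 -> ladd x y \in S27.
Proof. by move=> /inS [c ->] /inS [c' ->]; rewrite lin_add lin_in. Qed.

Definition s0 : C := (sqrtC (#|S27|%:R : C))^-1.

Lemma s0_neq0 : s0 != 0.
Proof.
rewrite /s0 invr_eq0 sqrtC_eq0 pnatr_eq0 -lt0n.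
by apply/card_gt0P; exists z0; exact: z0_in.
Qed.

Lemma ketS_E x : ket_S x = if x \in S27 then s0 else 0.
Proof. by []. Qed.

Lemma ketQS_E x : ket_QS x = if x \in S27 then sgn (Q27 x) * s0 else 0.
Proof. by []. Qed.

Lemma QN_ext v w : (forall k, v k = w k) -> QN v = QN w.
Proof. by move=> H; rewrite /QN !H. Qed.

Lemma Q27_z0 : Q27 z0 = 0.
Proof.
apply: val_inj; rewrite val_Q27 (@QN_ext _ (fun _ => 0%N)) //.
by move=> k; rewrite ffunE.
Qed.

Lemma ladd0 x : ladd x z0 = x.
Proof. exact: ladd_lab0. Qed.

Lemma laddK x : ladd x x = z0.
Proof. by apply/ffunP => j; rewrite !ffunE two2. Qed.

Lemma dot0 n (y : label n) : dot [ffun _ => 0] y = 0.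
Proof. by rewrite /dot big1 // => j _; rewrite ffunE mul0r. Qed.

Lemma pm00 : pm 0 0 = 1%:M.
Proof.
apply/matrixP => r c; rewrite !mxE addr0 eq_sym mul0r sgn0; by case: eqP.
Qed.

Lemma pm01 : pm 0 1 = pauliZ.
Proof.
apply/matrixP => r c; rewrite !mxE addr0.
by case: (I2_cases r) => ->; case: (I2_cases c) => -> //=; rewrite mul1r ?sgn0 ?sgn1.
Qed.

Lemma pm10 : pm 1 0 = pauliX.
Proof.
apply/matrixP => r c; rewrite !mxE mul0r sgn0.
by case: (I2_cases r) => ->; case: (I2_cases c) => -> //=.
Qed.

Lemma pm_pauli a b : pauli_group (pm a b).
Proof.
case: (I2_cases a) => ->; case: (I2_cases b) => ->.
- by rewrite pm00; exact: pauli_I.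
- by rewrite pm01; exact: pauli_Z.
- by rewrite pm10; exact: pauli_X.
have ->: pm 1 1 = pm 1 0 *m pm 0 1 by rewrite pm_mul mul0r sgn0 scale1r addr0 add0r.
by rewrite pm10 pm01; apply: pauli_mul; [exact: pauli_X|exact: pauli_Z].
Qed.

Lemma hv_orth k x : x \in S27 -> dot (hv k) x = 0.
Proof.
move=> /inS [c ->]; apply: val_inj; rewrite (@val_dot27 _ _ (fun j => hvN (nth 0%N pivs k) j %% 2)%N (linN (bitsOf c))).
- have := allP check_orth _ (bitsOf_in c) => /allP /(_ (val k)).
  by rewrite mem_iota /= => /(_ (ltn_ord k)) /eqP.
- by move=> j; rewrite val_hv.
- by move=> j; rewrite val_lin.
Qed.

Lemma apply_id (psi : state 27) : op_apply (tensor (fun _ => 1%:M)) psi = psi.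
Proof.
apply: functional_extensionality => x.
have ->: (fun _ : 'I_27 => (1%:M : 'M[C]_2)) = (fun j => pm (z0 j) (z0 j)).
  by apply: functional_extensionality => j; rewrite ffunE pm00.
by rewrite apply_pm ladd0 dot0 sgn0 mul1r.
Qed.

Lemma stepA (U : 'I_27 -> 'M[C]_2) (HU : forall j, clifford2 (U j))
  (Heq : op_apply (tensor U) ket_S = ket_QS) (b : label 27)
  (Hb : forall x, x \in S27 -> dot b x = 0) :
  op_apply (tensor (fun j => U j *m pm 0 (b j) *m adjoint (U j))) ket_QS = ket_QS.
Proof.
have E1 : tensor (fun j => U j *m pm 0 (b j) *m adjoint (U j)) =
  op_mul (tensor U) (op_mul (tensor (fun j => pm 0 (b j))) (tensor (fun j => adjoint (U j)))).
  rewrite !tensor_mul; congr tensor; apply: functional_extensionality => j.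
  by rewrite mulmxA.
rewrite E1 !apply_mul -Heq.
rewrite -(apply_mul (tensor (fun j => adjoint (U j))) (tensor U)) tensor_mul.
have ->: (fun j => adjoint (U j) *m U j) = (fun _ => 1%:M).
  by apply: functional_extensionality => j; rewrite uinv //; case: (HU j).
rewrite apply_id; congr op_apply.
apply: functional_extensionality => x.
have ->: (fun j => pm 0 (b j)) = (fun j => pm (z0 j) (b j)).
  by apply: functional_extensionality => j; rewrite ffunE.
rewrite apply_pm ladd0 ketS_E; case: ifP => Hx; last by rewrite mulr0.
by rewrite Hb // sgn0 mul1r.
Qed.

Lemma stepB (U : 'I_27 -> 'M[C]_2) (HU : forall j, clifford2 (U j))
  (Heq : op_apply (tensor U) ket_S = ket_QS) (k : 'I_21) (j : 'I_27) :
  hv k j = 1 -> forall r c : 'I_2, c != r -> (U j *m pauliZ *m adjoint (U j)) r c = 0.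
Proof.
move=> Hkj.
pose P := fun j => U j *m pm 0 (hv k j) *m adjoint (U j).
have HA : op_apply (tensor P) ket_QS = ket_QS := stepA HU Heq (@hv_orth k).
have HP : forall j, exists s : 'I_2, forall r c : 'I_2,
    if c == r + s then P j r c ^+ 4 = 1 else P j r c = 0.
  by move=> j'; apply: pauli_pmono; apply: (HU j').2.1; exact: pm_pauli.
have [s Hs] := fin_all_exists HP.
pose t : label 27 := [ffun j => s j].
have tE : forall j, t j = s j by move=> j'; rewrite ffunE.
have Ht : ket_QS t = (\prod_j P j (t j) (t j + t j)) * ket_QS (ladd t t).
  have := congr1 (fun f => f t) HA => /= <-.
  apply: apply_shift => j' r c H; move: (Hs j' r c); by rewrite -tE (negPf H).
have Hprod : \prod_j P j (t j) (t j + t j) != 0.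
  apply/prodf_neq0 => j' _; have := Hs j' (t j') (t j' + t j'); rewrite tE eqxx => H.
  by apply/eqP => H0; move: H; rewrite H0 expr0n /= => /eqP; rewrite eq_sym oner_eq0.
have tS : t \in S27.
  apply/negPn/negP => Hn; move: Ht; rewrite ketQS_E (negPf Hn) laddK ketQS_E z0_in Q27_z0 sgn0 mul1r.
  by move/eqP; rewrite eq_sym mulf_eq0 (negPf Hprod) (negPf s0_neq0).
have s0j : forall j, hv k j = 0 -> s j = 0.
  move=> j' H0; have EP : P j' = 1%:M.
    by rewrite /P H0 pm00 mulmx1; case: (HU j') => ->.
  case: (I2_cases (s j')) => // E1; move: (Hs j' 0 1).
  by rewrite E1 add0r eqxx EP mxE /= expr0n /= => /eqP; rewrite eq_sym oner_eq0.
have sz : forall j, s j = 0.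
  move: tS => /inS [c Hc].
  have Hk : val k \in iota 0 21 by rewrite mem_iota ltn_ord.
  have := allP (allP check_supp _ (bitsOf_in c)) (val k) Hk => /implyP H.
  have H' : all (fun j => linN (bitsOf c) j == 0%N) (iota 0 27).
    apply: H; apply/allP => j'; rewrite mem_iota /= => Hj'; apply/implyP => Hh.
    have := s0j (Ordinal Hj'); rewrite -tE Hc => E.
    rewrite -(val_lin c (Ordinal Hj')) E //; apply: val_inj; by rewrite val_hv /=; apply/eqP.
  move=> j'; apply: val_inj; rewrite -tE Hc val_lin /=.
  by apply/eqP; apply: (allP H'); rewrite mem_iota /=.
move=> r c Hrc; have := Hs j r c; rewrite sz addr0 (negPf Hrc).
by rewrite /P Hkj pm01.
Qed.

Lemma ladd0l x : ladd z0 x = x.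
Proof. by apply/ffunP => j; rewrite !ffunE add0r. Qed.

Lemma val_xs (bs : seq nat) j : val (lin (cfb bs) j) = linN (bsn bs) (val j).
Proof. by rewrite val_lin bitsOf_cfb. Qed.

Theorem not_LC : ~ LC_equiv ket_S ket_QS.
Proof.
move=> [U [HU Heq]].
have Hd : forall j, forall r c : 'I_2, c != r -> (U j *m pauliZ *m adjoint (U j)) r c = 0.
  move=> j; have Hj : val j \in iota 0 27 by rewrite mem_iota ltn_ord.
  have := allP check_cover _ Hj => /hasP [k Hk /eqP Hv].
  have Hk' : (k < 21)%N by move: Hk; rewrite mem_iota.
  apply: (@stepB U HU Heq (Ordinal Hk')); apply: val_inj; by rewrite val_hv /= Hv.
have HM : forall j, exists t : 'I_2, forall r c : 'I_2,
    if c == r + t then U j r c != 0 else U j r c == 0.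
  by move=> j; apply: diag_mono; [case: (HU j) | exact: Hd].
have [T HT] := fin_all_exists HM.
pose Tl : label 27 := [ffun j => T j].
have HR : forall j, exists w : C, w ^+ 4 = 1 /\ U j 0 (T j) = w * U j 1 (1 + T j).
  by move=> j; apply: x_ratio; [exact: HU | exact: HT].
have [w Hw] := fin_all_exists HR.
have Hsh : forall x, ket_QS x = (\prod_j U j (x j) (x j + T j)) * ket_S (ladd x Tl).
  move=> x; rewrite -Heq (@apply_shift _ _ Tl).
    by congr (_ * _); apply: eq_bigr => j _; rewrite ffunE.
  move=> j r c; rewrite ffunE => H; move: (HT j r c); by rewrite (negPf H) => /eqP.
have H0 := Hsh z0.
rewrite ketQS_E z0_in Q27_z0 sgn0 mul1r ladd0l in H0.
have TlS : Tl \in S27.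
  apply/negPn/negP => Hn; move: H0; rewrite ketS_E (negPf Hn) mulr0.
  by move/eqP; rewrite (negPf s0_neq0).
rewrite ketS_E TlS in H0.
have Hp0 : \prod_j U j 0 (0 + T j) = 1.
  apply: (mulIf s0_neq0); rewrite mul1r {2}H0; congr (_ * _).
  by apply: eq_bigr => j _; rewrite ffunE.
have Hkey : forall x, x \in S27 -> sgn (Q27 x) = \prod_j (w j ^+ 3) ^+ val (x j).
  move=> x Hx; have := Hsh x; rewrite ketQS_E Hx ketS_E (S_add Hx TlS) => /(mulIf s0_neq0) ->.
  transitivity (\prod_j ((w j ^+ 3) ^+ val (x j) * U j 0 (0 + T j))).
    apply: eq_bigr => j _; case: (I2_cases (x j)) => ->; first by rewrite expr0 mul1r.
    rewrite expr1; case: (Hw j) => Hw4 E; rewrite add0r E mulrA -exprSr Hw4 mul1r.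
    by [].
  by rewrite big_split /= Hp0 mulr1.
have Hh4 : forall j, (w j ^+ 3) ^+ 4 = 1.
  by move=> j; rewrite -exprM mulnC exprM (Hw j).1 expr1n.
have L : \prod_(p <- certL) sgn (Q27 (lin (cfb p.1))) ^+ p.2 =
         \prod_(p <- certL) (\prod_j (w j ^+ 3) ^+ val (lin (cfb p.1) j)) ^+ p.2.
  by apply: eq_bigr => p _; rewrite Hkey // lin_in.
have LHS1 : \prod_(p <- certL) sgn (Q27 (lin (cfb p.1))) ^+ p.2 = -1.
  rewrite /sgn; under eq_bigr => p _ do rewrite -exprM.
  rewrite prodrXr -signr_odd.
  have -> : (\sum_(p <- certL) val (Q27 (lin (cfb p.1))) * p.2)%N =
            (\sum_(p <- certL) QN (fun k => linN (bsn p.1) (k %% 27)) * p.2)%N.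
    apply: eq_bigr => p _; congr (_ * _)%N; rewrite val_Q27; apply: QN_ext => k.
    by rewrite val_xs.
  by rewrite check_cert1 expr1.
have RHS1 : \prod_(p <- certL) (\prod_j (w j ^+ 3) ^+ val (lin (cfb p.1) j)) ^+ p.2 = 1.
  under eq_bigr => p _ do rewrite -prodrXl.
  rewrite exchange_big /=; apply: big1 => j _.
  move: (Hh4 j); set h := w j ^+ 3 => Hh; clearbody h.
  under eq_bigr => p _ do rewrite -exprM.
  rewrite prodrXr -(expr_mod _ Hh).
  have Hj : val j \in iota 0 27 by rewrite mem_iota ltn_ord.
  have := allP check_cert2 _ Hj => /eqP E.
  rewrite (_ : (\sum_(p <- certL) val (lin (cfb p.1) j) * p.2)%N =
             (\sum_(p <- certL) p.2 * linN (bsn p.1) (val j))%N).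
    by rewrite E expr0.
  by apply: eq_bigr => p _; rewrite val_xs mulnC.
move: L; rewrite LHS1 RHS1 => /eqP; rewrite eq_sym (negPf oneNone) //.
Qed.

Definition aL : seq nat := [:: 7;3;3;5;3;3;3;1;3;3;1;3;1;1;1;7;3;3;1;1;1;3;1;1;1;1;1]%N.

Lemma check_LU : all (fun bs =>
  ((\sum_(0 <= j < 27) nth 0%N aL j * linN bs j) %% 8 == 4 * QN (fun k => linN bs (k %% 27)))%N)
  allbits6.
Proof. rewrite /linN unlock. vm_compute. reflexivity. Qed.

Definition om : C := sqrtC 'i.

Lemma om2 : om ^+ 2 = 'i. Proof. exact: sqrtCK. Qed.
Lemma om4 : om ^+ 4 = -1.
Proof. by rewrite (_ : 4 = 2 * 2)%N // exprM om2 sqrCi. Qed.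
Lemma om8 : om ^+ 8 = 1.
Proof. by rewrite (_ : 8 = 4 * 2)%N // exprM om4 expr2 mulrNN mulr1. Qed.

Lemma omc : om * om^* = 1.
Proof.
rewrite -normCK; have: `|om| ^+ 2 = `|om ^+ 2| by rewrite normrX.
by rewrite om2 normCi.
Qed.

Definition dg (e : C) : 'M[C]_2 := \matrix_(r, c) (if c == r then (if r == 0 then 1 else e) else 0).

Lemma dg_unitary e : e * e^* = 1 -> unitary2 (dg e).
Proof.
move=> He; apply/matrixP => r c; rewrite /adjoint mulE !mxE.
by case: (I2_cases r) => ->; case: (I2_cases c) => -> /=;
  rewrite ?mulr0 ?mul0r ?addr0 ?add0r ?rmorph0 ?rmorph1 ?mul1r ?mulr0 ?mul0r ?addr0 ?add0r ?He.
Qed.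

Lemma omc_pow k : om ^+ k * (om ^+ k)^* = 1.
Proof. by rewrite rmorphXn -exprMn omc expr1n. Qed.

Theorem LU : LU_equiv ket_S ket_QS.
Proof.
exists (fun j => dg (om ^+ nth 0%N aL j)); split.
  by move=> j; apply: dg_unitary; exact: omc_pow.
apply: functional_extensionality => x.
rewrite (@apply_shift _ _ z0); last first.
  by move=> j r c; rewrite ffunE addr0 mxE => /negPf ->.
rewrite ladd0 ketS_E ketQS_E; case: ifP => Hx; last by rewrite !mulr0.
congr (_ * _).
have -> : \prod_(j < 27) dg (om ^+ nth 0%N aL j) (x j) (x j + z0 j) =
          \prod_(j < 27) om ^+ (nth 0%N aL j * val (x j)).
  apply: eq_bigr => j _; rewrite ffunE addr0 mxE eqxx.
  by case: (I2_cases (x j)) => -> /=; rewrite ?muln0 ?expr0 ?muln1.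
rewrite prodrXr -(expr_mod _ om8).
move: Hx => /inS [c ->].
have E : (\sum_(j < 27) nth 0%N aL j * val (lin c j))%N =
         (\sum_(0 <= j < 27) nth 0%N aL j * linN (bitsOf c) j)%N.
  by rewrite big_mkord; apply: eq_bigr => j _; rewrite val_lin.
rewrite E (eqP (allP check_LU _ (bitsOf_in c))) exprM om4 /sgn val_Q27.
congr (_ ^+ _); apply: QN_ext => k; by rewrite val_lin.
Qed.

Lemma tensor_scale n (s : 'I_n -> C) (M : 'I_n -> 'M[C]_2) :
  tensor (fun j => s j *: M j) = op_scale (\prod_j s j) (tensor M).
Proof.
apply/ffunP => x; apply/ffunP => y; rewrite !ffunE -big_split /=.
by apply: eq_bigr => j _; rewrite mxE.
Qed.

Lemma tensor_scale0 n (c : C) (M : 'I_n.+1 -> 'M[C]_2) :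
  tensor (fun j => if j == ord0 then c *: M j else M j) = op_scale c (tensor M).
Proof.
apply/ffunP => x; apply/ffunP => y; rewrite !ffunE (bigD1 ord0) //= [in RHS](bigD1 ord0) //=.
rewrite ?eqxx mxE -mulrA; congr (_ * (_ * _)); apply: eq_bigr => j /negPf Hj.
by rewrite Hj.
Qed.

Lemma apply_scale n (c : C) (A : op n) psi x :
  op_apply (op_scale c A) psi x = c * op_apply A psi x.
Proof.
rewrite /op_apply big_distrr /=; apply: eq_bigr => y _; by rewrite !ffunE mulrA.
Qed.

Lemma mul_scale n (c d : C) (A B : op n) :
  op_mul (op_scale c A) (op_scale d B) = op_scale (c * d) (op_mul A B).
Proof.
apply/ffunP => x; apply/ffunP => z; rewrite !ffunE big_distrr /=.
apply: eq_bigr => y _; rewrite !ffunE; ring.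
Qed.

Lemma scale_scale n (c d : C) (A : op n) : op_scale c (op_scale d A) = op_scale (c * d) A.
Proof. by apply/ffunP => x; apply/ffunP => y; rewrite !ffunE mulrA. Qed.

Lemma tensor1 n : tensor (fun _ : 'I_n => 1%:M) = op_id n.
Proof.
apply/ffunP => x; apply/ffunP => y; rewrite !ffunE.
case: eqP => [->|Hxy].
  by rewrite big1 // => j _; rewrite mxE eqxx.
have [j Hj] : exists j, x j != y j.
  apply/existsP; rewrite -negb_forall; apply/negP => /forallP H.
  by apply: Hxy; apply/ffunP => j; apply/eqP/H.
by rewrite (bigD1 j) //= mxE (negPf Hj) mul0r.
Qed.

Lemma tensor_pm_mul n (a z a' z' : label n) :
  op_mul (tensor (fun j => pm (a j) (z j))) (tensor (fun j => pm (a' j) (z' j)))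
  = op_scale (sgn (dot z a')) (tensor (fun j => pm (ladd a a' j) (ladd z z' j))).
Proof.
rewrite tensor_mul.
have ->: (fun j => pm (a j) (z j) *m pm (a' j) (z' j)) =
         (fun j => sgn (z j * a' j) *: pm (ladd a a' j) (ladd z z' j)).
  by apply: functional_extensionality => j; rewrite pm_mul !ffunE.
by rewrite tensor_scale /dot sgn_sum.
Qed.

Lemma dotDl n (x y w : label n) : dot (ladd x y) w = dot x w + dot y w.
Proof. by rewrite /dot -big_split /=; apply: eq_bigr => j _; rewrite ffunE mulrDl. Qed.

Lemma dotDr n (w x y : label n) : dot w (ladd x y) = dot w x + dot w y.
Proof. by rewrite /dot -big_split /=; apply: eq_bigr => j _; rewrite ffunE mulrDr. Qed.

Lemma dotC n (x y : label n) : dot x y = dot y x.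
Proof. by rewrite /dot; apply: eq_bigr => j _; rewrite mulrC. Qed.

Lemma laddC n (x y : label n) : ladd x y = ladd y x.
Proof. by apply/ffunP => j; rewrite !ffunE addrC. Qed.

Lemma laddACA n (x y u v : label n) : ladd (ladd x y) (ladd u v) = ladd (ladd x u) (ladd y v).
Proof. by apply/ffunP => j; rewrite !ffunE addrACA. Qed.

Lemma laddA n (x y u : label n) : ladd x (ladd y u) = ladd (ladd x y) u.
Proof. by apply/ffunP => j; rewrite !ffunE addrA. Qed.

Definition qgood (q : label 27 -> 'I_2) (beta : label 27 -> label 27) :=
  [/\ (forall x y, q (ladd x y) = q x + q y + dot (beta x) y),
      (forall x y, beta (ladd x y) = ladd (beta x) (beta y)),
      (forall x, dot (beta x) x = 0) &
      (forall x y, dot (beta x) y = dot (beta y) x)].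

Definition PT := ({ffun 'I_6 -> 'I_2} * {ffun 'I_21 -> 'I_2})%type.

Definition bbv (d : {ffun 'I_21 -> 'I_2}) : label 27 := [ffun j => \sum_(k < 21) d k * hv k j].
Definition zzv (beta : label 27 -> label 27) (p : PT) := ladd (bbv p.2) (beta (lin p.1)).
Definition padd (p p' : PT) : PT :=
  ([ffun i => p.1 i + p'.1 i], [ffun k => p.2 k + p'.2 k]).

Definition gel q beta (p : PT) : op 27 :=
  tensor (fun j => if j == ord0 then sgn (q (lin p.1)) *: pm (lin p.1 j) (zzv beta p j)
                   else pm (lin p.1 j) (zzv beta p j)).

Lemma gelE q beta p : gel q beta p =
  op_scale (sgn (q (lin p.1))) (tensor (fun j => pm (lin p.1 j) (zzv beta p j))).
Proof. exact: (@tensor_scale0 26). Qed.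

Lemma bbv_add d d' : ladd (bbv d) (bbv d') = bbv [ffun k => d k + d' k].
Proof.
apply/ffunP => j; rewrite !ffunE -big_split /=; apply: eq_bigr => k _.
by rewrite -mulrDl; congr (_ * _); rewrite ffunE.
Qed.

Lemma bbv_orth d x : x \in S27 -> dot (bbv d) x = 0.
Proof.
move=> Hx; rewrite /dot.
under eq_bigr => j _ do rewrite ffunE mulr_suml.
rewrite exchange_big /= big1 // => k _.
transitivity (d k * dot (hv k) x); last by rewrite hv_orth // mulr0.
by rewrite /dot big_distrr /=; apply: eq_bigr => j _; rewrite mulrA.
Qed.

Lemma q0 q beta : qgood q beta -> q z0 = 0.
Proof.
move=> [Hq _ Hbb _]; have := Hq z0 z0; rewrite laddK Hbb addr0.
by move/eqP; rewrite -{1}(addr0 (q z0)) (inj_eq (addrI _)) eq_sym => /eqP.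
Qed.

Lemma beta0 q beta : qgood q beta -> beta z0 = z0.
Proof.
move=> [_ Hb _ _]; have := Hb z0 z0; rewrite laddK => H.
apply/ffunP => j; move/ffunP: H => /(_ j); rewrite !ffunE => /eqP.
by rewrite -{1}(addr0 (beta z0 j)) (inj_eq (addrI _)) eq_sym => /eqP.
Qed.

Lemma gel_mul q beta p p' : qgood q beta ->
  op_mul (gel q beta p) (gel q beta p') = gel q beta (padd p p').
Proof.
move=> G; have [Hq Hb Hbb Hsym] := G.
rewrite !gelE mul_scale tensor_pm_mul scale_scale.
have Ea : lin (padd p p').1 = ladd (lin p.1) (lin p'.1) by rewrite lin_add.
have Ez : zzv beta (padd p p') = ladd (zzv beta p) (zzv beta p').
  by rewrite /zzv Ea Hb /= -bbv_add laddACA.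
rewrite Ez Ea; congr op_scale.
rewrite Hq /zzv dotDl bbv_orth ?lin_in // add0r !sgnD; ring.
Qed.

Definition p0 : PT := ([ffun _ => 0], [ffun _ => 0]).

Lemma bbv0 : bbv [ffun _ => 0] = z0.
Proof. by apply/ffunP => j; rewrite !ffunE big1 // => k _; rewrite ffunE mul0r. Qed.

Lemma op_scale1 n (A : op n) : op_scale 1 A = A.
Proof. by apply/ffunP => x; apply/ffunP => y; rewrite !ffunE mul1r. Qed.

Lemma gel0 q beta : qgood q beta -> gel q beta p0 = op_id 27.
Proof.
move=> G; rewrite gelE /= lin0 (q0 G) sgn0 op_scale1 /zzv /= bbv0 lin0 (beta0 G) laddK.
rewrite -tensor1; congr tensor; apply: functional_extensionality => j.
by rewrite ffunE pm00.
Qed.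

Lemma padd_self p : padd p p = p0.
Proof. by rewrite /padd /p0; congr pair; apply/ffunP => i; rewrite !ffunE two2. Qed.

Lemma padd_comm p p' : padd p p' = padd p' p.
Proof. by rewrite /padd; congr pair; apply/ffunP => i; rewrite !ffunE addrC. Qed.

Lemma sgn_pauli t M : pauli_group M -> pauli_group (sgn t *: M).
Proof.
move=> HM; case: (I2_cases t) => ->; first by rewrite sgn0 scale1r.
have ->: sgn 1 *: M = (pm 1 1 *m pm 1 1) *m M.
  by rewrite pm_mul mul1r sgn1 two2 pm00 -scalemxAl mul1mx.
by apply: pauli_mul => //; apply: pauli_mul; exact: pm_pauli.
Qed.

Lemma gel_pauli q beta p : pauli_n (gel q beta p).
Proof.
exists (fun j => if j == ord0 then sgn (q (lin p.1)) *: pm (lin p.1 j) (zzv beta p j)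
                   else pm (lin p.1 j) (zzv beta p j)); split => // j.
by case: ifP => _; [apply: sgn_pauli|]; exact: pm_pauli.
Qed.

Lemma gel_apply q beta p (psi : state 27) x :
  op_apply (gel q beta p) psi x =
  sgn (q (lin p.1)) * (sgn (dot (zzv beta p) (ladd x (lin p.1))) * psi (ladd x (lin p.1))).
Proof. by rewrite gelE apply_scale apply_pm. Qed.

Lemma gel_fix q beta p (psi : state 27) : qgood q beta ->
  (forall x, psi x = if x \in S27 then sgn (q x) * s0 else 0) ->
  op_apply (gel q beta p) psi = psi.
Proof.
move=> G Hpsi; have [Hq Hb Hbb Hsym] := G.
apply: functional_extensionality => x; rewrite gel_apply !Hpsi.
set a := lin p.1.
have Ha : a \in S27 by exact: lin_in.
case Hx: (x \in S27).
  rewrite (S_add Hx Ha) Hq /zzv dotDl bbv_orth ?S_add // add0r dotDr Hbb addr0.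
  rewrite (Hsym a x) !sgnD.
  transitivity (sgn (q x) * s0 * ((sgn (q a) * sgn (q a)) * (sgn (dot (beta x) a) * sgn (dot (beta x) a)))).
    ring.
  by rewrite !sgnK !mulr1.
case Hxa: (ladd x a \in S27); last by rewrite !mulr0.
exfalso; move: Hx; rewrite -(ladd0 x) -(laddK a) laddA.
by rewrite (S_add Hxa Ha).
Qed.

Lemma nth_bitsOf c (i : 'I_6) : nth 0%N (bitsOf c) i = val (c i).
Proof.
rewrite /bitsOf (nth_map 0%N); last by rewrite size_iota.
rewrite nth_iota // add0n; congr (val (c _)); apply: val_inj; by rewrite /= modn_small.
Qed.

Lemma lin_inj c c' : lin c = lin c' -> c = c'.
Proof.
move=> E.
have H := allP (allP check_lininj _ (bitsOf_in c)) _ (bitsOf_in c').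
have Hb : bitsOf c = bitsOf c'.
  apply/eqP; apply: (implyP H); apply/allP => j; rewrite mem_iota /= => Hj.
  by rewrite -(val_lin c (Ordinal Hj)) -(val_lin c' (Ordinal Hj)) E.
apply/ffunP => i; apply: val_inj; by rewrite -!nth_bitsOf Hb.
Qed.

Definition pivo (k : 'I_21) : 'I_27 := inZp (nth 0%N pivs k).

Lemma val_pivo k : val (pivo k) = nth 0%N pivs k.
Proof.
rewrite /= modn_small //; apply: (allP check_pivlt); by rewrite mem_iota ltn_ord.
Qed.

Lemma iota_ord n (k : 'I_n) : val k \in iota 0 n.
Proof. by rewrite mem_iota ltn_ord. Qed.

Lemma hv_pivo k k' : hv k' (pivo k) = if k == k' then 1 else 0.
Proof.
apply: val_inj; rewrite val_hv val_pivo.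
have := allP (allP check_piv _ (iota_ord k)) _ (iota_ord k') => /eqP ->.
by rewrite val_eqE; case: eqP.
Qed.

Lemma bbv_pivo d k : bbv d (pivo k) = d k.
Proof.
rewrite ffunE (bigD1 k) //= hv_pivo eqxx mulr1 big1 ?addr0 // => k' Hk'.
by rewrite hv_pivo eq_sym (negPf Hk') mulr0.
Qed.

Lemma bbv_inj d d' : bbv d = bbv d' -> d = d'.
Proof. by move=> E; apply/ffunP => k; rewrite -!bbv_pivo E. Qed.

Lemma sgn_inj s t : sgn s = sgn t -> s = t.
Proof.
move=> E; have: sgn (s + t) == 1 by rewrite sgnD E sgnK.
rewrite sgn_eq1 => /eqP H; rewrite -[t]add0r -H -addrA two2 addr0 //.
Qed.

Definition ej (j : 'I_27) : label 27 := [ffun i => if i == j then 1 else 0].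

Lemma dot_ej z j : dot z (ej j) = z j.
Proof.
rewrite /dot (bigD1 j) //= ffunE eqxx mulr1 big1 ?addr0 // => i Hi.
by rewrite ffunE (negPf Hi) mulr0.
Qed.

Lemma z0E j : z0 j = 0. Proof. by rewrite ffunE. Qed.
Lemma laddE n (x y : label n) j : ladd x y j = x j + y j. Proof. by rewrite ffunE. Qed.

Lemma gel_entry q beta p x y :
  gel q beta p x y = sgn (q (lin p.1)) * \prod_j pm (lin p.1 j) (zzv beta p j) (x j) (y j).
Proof. by rewrite gelE !ffunE. Qed.

Lemma gel_inj q beta : qgood q beta -> injective (gel q beta).
Proof.
move=> G [c d] [c' d'] E.
set a := lin c; set a' := lin c'.
have Ea : a = a'.
  apply/eqP/negPn/negP => Hn.
  have [j Hj] : exists j, a j != a' j.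
    apply/existsP; rewrite -negb_forall; apply: contra Hn => /forallP H.
    by apply/eqP/ffunP => j; apply/eqP/H.
  move/ffunP: E => /(_ z0) /ffunP /(_ a); rewrite !gel_entry /= -/a -/a'.
  rewrite [in X in _ = X](bigD1 j) //= mxE z0E add0r (negPf Hj) mul0r mulr0.
  move/eqP; rewrite mulf_eq0 (negPf (sgn_neq0 _)) /= prodf_seq_eq0 => /hasP [i _].
  by rewrite mxE z0E add0r eqxx (negPf (sgn_neq0 _)).
have Ez : zzv beta (c, d) = zzv beta (c', d').
  apply/ffunP => j; apply: sgn_inj; rewrite -!dot_ej.
  move/ffunP: E => /(_ (ladd (ej j) a)) /ffunP /(_ (ej j)); rewrite !gel_entry /= -/a -/a' -Ea.
  move/(mulfI (sgn_neq0 _)).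
  have F : forall z : label 27, \prod_i pm (a i) (z i) (ladd (ej j) a i) (ej j i) = sgn (dot z (ej j)).
    move=> z; rewrite /dot sgn_sum; apply: eq_bigr => i _; rewrite mxE laddE -addrA two2 addr0 eqxx //.
  by rewrite !F.
have Eb : bbv d = bbv d'.
  move: Ez; rewrite /zzv /= -/a -/a' -Ea => Ez.
  by rewrite -[bbv d]ladd0 -(laddK (beta a)) laddA Ez -laddA laddK ladd0.
by rewrite (lin_inj Ea) (bbv_inj Eb).
Qed.

Lemma gel_neg q beta p : qgood q beta -> gel q beta p != op_scale (-1) (op_id 27).
Proof.
move=> G; apply/eqP => E; move/ffunP: E => /(_ z0) /ffunP /(_ z0).
rewrite gel_entry !ffunE eqxx mulr1.
case: (eqVneq (lin p.1) z0) => [Ha|Hn].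
  rewrite Ha (q0 G) sgn0 mul1r big1 => [/eqP|j _]; first by rewrite (negPf oneNone).
  by rewrite mxE !ffunE addr0 eqxx mulr0 sgn0.
have [j Hj] : exists j, lin p.1 j != 0.
  apply/existsP; rewrite -negb_forall; apply: contra Hn => /forallP H.
  by apply/eqP/ffunP => j; rewrite z0E; apply/eqP; move: (H j).
rewrite (bigD1 j) //= mxE z0E add0r eq_sym (negPf Hj) mul0r mulr0 => /eqP.
by rewrite eq_sym oppr_eq0 oner_eq0.
Qed.

Lemma zzv_c0 beta c : zzv beta (c, [ffun _ => 0]) = beta (lin c).
Proof. by rewrite /zzv /= bbv0 ladd0l. Qed.

Definition ekf (k : 'I_21) : {ffun 'I_21 -> 'I_2} := [ffun k' => if k' == k then 1 else 0].

Lemma bbv_ek k : bbv (ekf k) = hv k.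
Proof.
apply/ffunP => j; rewrite ffunE (bigD1 k) //= ffunE eqxx mul1r big1 ?addr0 // => k' Hk'.
by rewrite ffunE (negPf Hk') mul0r.
Qed.

Lemma dot_hv_w k (w : label 27) :
  (forall m, (m < 6)%N -> w (inZp (nth 0%N Icoords m)) = 0) ->
  dot (hv k) w = w (pivo k).
Proof.
move=> Hw; rewrite /dot (bigD1 (pivo k)) //= hv_pivo eqxx mul1r big1 ?addr0 // => i Hi.
case HI: (val i \in Icoords).
  have Hm : (index (val i) Icoords < 6)%N by rewrite -[6%N]/(size Icoords) index_mem.
  have Ei : i = inZp (nth 0%N Icoords (index (val i) Icoords)).
    by apply: val_inj; rewrite nth_index //= modn_small.
  by rewrite Ei Hw // mulr0.
have -> : hv k i = 0.
  apply: val_inj; rewrite val_hv /hvN HI.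
  case: eqP => // E; case/eqP: Hi; apply: val_inj; by rewrite val_pivo.
by rewrite mul0r.
Qed.

Lemma gel_unique q beta (psi phi : state 27) : qgood q beta ->
  (forall x, psi x = if x \in S27 then sgn (q x) * s0 else 0) ->
  (forall p, op_apply (gel q beta p) phi = phi) ->
  exists c : C, phi = (fun x => c * psi x).
Proof.
move=> G Hpsi Hphi; have [Hq Hb Hbb Hsym] := G.
exists (phi z0 / s0); apply: functional_extensionality => x; rewrite Hpsi.
have Hsh : forall p y, phi y = sgn (q (lin p.1)) *
    (sgn (dot (zzv beta p) (ladd y (lin p.1))) * phi (ladd y (lin p.1))).
  by move=> p y; rewrite -gel_apply Hphi.
case Hx: (x \in S27).
  move: Hx => /inS [c1 Ex].
  have := Hsh (c1, [ffun _ => 0]) z0; rewrite /= zzv_c0 ladd0l -Ex Hbb sgn0 mul1r => ->.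
  transitivity (sgn (q x) * sgn (q x) * phi x * (s0 / s0)).
    by rewrite sgnK divff ?s0_neq0 // mul1r mulr1.
  ring.
rewrite mulr0.
pose v := [seq val (x (inZp (nth 0%N Icoords m))) | m <- iota 0 6].
have Hv : v \in allbits6.
  apply: bitsl_in; first by rewrite size_map size_iota.
  by apply/allP => b /mapP [m _ ->]; exact: ltn_ord.
have /hasP [bs _ /allP Hbs] := allP check_dec _ Hv.
set y := lin (cfb bs).
set w := ladd x y.
have Hw : forall m, (m < 6)%N -> w (inZp (nth 0%N Icoords m)) = 0.
  move=> m Hm; apply: val_inj; rewrite laddE valD2 val_xs /=.
  have Hlt : (nth 0%N Icoords m < 27)%N by apply: (allP check_Ilt); rewrite mem_iota.
  rewrite (modn_small Hlt) (eqP (Hbs m _)); last by rewrite mem_iota.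
  rewrite /v (nth_map 0%N) ?size_iota // nth_iota // add0n.
  by rewrite addnn -muln2 modnMl.
have HwS : w \notin S27.
  apply/negP => H; move: Hx; rewrite -[x]ladd0 -(laddK y) laddA -/w.
  by rewrite (S_add H (lin_in _)).
have -> : phi x = sgn (q y) * (sgn (dot (zzv beta (cfb bs, [ffun _ => 0])) w) * phi w).
  exact: (Hsh (cfb bs, [ffun _ => 0]) x).
suff -> : phi w = 0 by rewrite !mulr0.
have [j Hj] : exists j, w j != 0.
  apply/existsP; rewrite -negb_forall; apply: contra HwS => /forallP H.
  have -> : w = z0 by apply/ffunP => j; rewrite z0E; apply/eqP; move: (H j).
  exact: z0_in.
have Hjp : val j \in pivs.
  have := allP check_part _ (iota_ord j); case/orP => // HI.
  have Hm : (index (val j) Icoords < 6)%N by rewrite -[6%N]/(size Icoords) index_mem.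
  have Ei : j = inZp (nth 0%N Icoords (index (val j) Icoords)).
    by apply: val_inj; rewrite nth_index //= modn_small.
  by move: Hj; rewrite Ei Hw // eqxx.
have Hk : (index (val j) pivs < 21)%N by rewrite -[21%N]/(size pivs) index_mem.
set k := Ordinal Hk.
have Ej : j = pivo k by apply: val_inj; rewrite val_pivo /= nth_index.
have := Hsh ([ffun _ => 0], ekf k) w.
rewrite /= lin0 (q0 G) sgn0 mul1r ladd0 /zzv /= bbv_ek lin0 (beta0 G) ladd0.
rewrite dot_hv_w // -Ej.
have -> : w j = 1 by case: (I2_cases (w j)) Hj => ->.
rewrite sgn1 mulN1r => /eqP; rewrite -addr_eq0 -mulr2n mulrn_eq0 /= => /eqP //.
Qed.

Theorem stab_generic q beta (psi : state 27) : qgood q beta ->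
  (forall x, psi x = if x \in S27 then sgn (q x) * s0 else 0) ->
  stabilizer_state psi.
Proof.
move=> G Hpsi.
exists (map (gel q beta) (enum {: {ffun 'I_6 -> 'I_2} * {ffun 'I_21 -> 'I_2}})).
split.
  split; [|split; [|split; [|split; [|split; [|split; [|split]]]]]].
- by rewrite map_inj_uniq ?enum_uniq //; exact: gel_inj.
- rewrite size_map -cardE card_prod !card_ffun !card_ord -expnD //.
- by move=> A /mapP [p _ ->]; exact: gel_pauli.
- by apply/mapP; exists p0; rewrite ?mem_enum // gel0.
- move=> A B /mapP [p _ ->] /mapP [p' _ ->]; rewrite gel_mul //.
  by apply/mapP; exists (padd p p'); rewrite ?mem_enum.
- move=> A /mapP [p _ ->]; exists (gel q beta p).
    by apply/mapP; exists p; rewrite ?mem_enum.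
  by rewrite gel_mul // padd_self gel0.
- by move=> A B /mapP [p _ ->] /mapP [p' _ ->]; rewrite !gel_mul // padd_comm.
- by apply/mapP => [[p _ /esym H]]; move: (gel_neg p G); rewrite H eqxx.
split.
- move=> H; have := congr1 (fun f => f z0) H; rewrite /= Hpsi z0_in (q0 G) sgn0 mul1r.
  by move/eqP; rewrite (negPf s0_neq0).
- by move=> A /mapP [p _ ->]; exact: gel_fix.
- move=> phi Hphi; apply: (gel_unique G Hpsi) => p; apply: Hphi.
  by apply/mapP; exists p; rewrite ?mem_enum.
Qed.

Definition adj (j : nat) : seq nat :=
  match j with
  | 0 => [:: 1; 2; 7]
  | 1 => [:: 0; 3; 7; 15]
  | 2 => [:: 0; 3; 7; 15]
  | 3 => [:: 1; 2; 7]
  | 7 => [:: 0; 1; 2; 3; 15]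
  | 15 => [:: 1; 2; 7]
  | _ => [::]
  end%N.

Definition betaQ (x : label 27) : label 27 :=
  [ffun j : 'I_27 => \sum_(k <- adj (val j)) x (inZp k)].

Lemma dot_nat (u v : label 27) : dot u v = \sum_(0 <= k < 27) u (inZp k) * v (inZp k).
Proof.
rewrite /dot big_mkord; apply: eq_bigr => j _.
by have -> : (inZp j : 'I_27) = j by apply: val_inj; rewrite /= modn_small.
Qed.

Lemma dot_betaQ x y : dot (betaQ x) y =
  \sum_(0 <= k < 27) (\sum_(i <- adj k) x (inZp i)) * y (inZp k).
Proof.
rewrite dot_nat; apply: eq_big_nat => k /andP [_ Hk]; rewrite ffunE /= modn_small //.
Qed.

Lemma Hq_Q x y : Q27 (ladd x y) = Q27 x + Q27 y + dot (betaQ x) y.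
Proof.
rewrite dot_betaQ /Q27 /= /Defs.coord /= !laddE.
rewrite unlock /=.
ring.
Qed.

Lemma Hbb_Q x : dot (betaQ x) x = 0.
Proof.
rewrite -(two2 (Q27 x)) dot_betaQ /Q27 /= /Defs.coord /=.
rewrite unlock /=.
ring.
Qed.

Lemma Hsym_Q x y : dot (betaQ x) y = dot (betaQ y) x.
Proof.
rewrite !dot_betaQ unlock /=.
ring.
Qed.

Lemma Hb_Q x y : betaQ (ladd x y) = ladd (betaQ x) (betaQ y).
Proof.
apply/ffunP => j; rewrite laddE !ffunE -big_split /=.
by apply: eq_bigr => k _; rewrite laddE.
Qed.

Lemma qgood_Q : qgood Q27 betaQ.
Proof. split; [exact: Hq_Q|exact: Hb_Q|exact: Hbb_Q|exact: Hsym_Q]. Qed.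

Lemma qgood_0 : qgood (fun _ => 0) (fun _ => z0).
Proof.
split.
- by move=> x y; rewrite dot0 !addr0.
- by move=> x y; rewrite laddK.
- by move=> x; rewrite dot0.
- by move=> x y; rewrite !dot0.
Qed.

Theorem stab_S : stabilizer_state ket_S.
Proof.
apply: (stab_generic qgood_0) => x; by rewrite ketS_E sgn0 mul1r.
Qed.

Theorem stab_QS : stabilizer_state ket_QS.
Proof. exact: (stab_generic qgood_Q ketQS_E). Qed.


Theorem mainTheorem1 :
  [/\ stabilizer_state ket_S,
      stabilizer_state ket_QS,
      LU_equiv ket_S ket_QS,
      ~ LC_equiv ket_S ket_QS &
      ~ (forall (n : nat) (psi0 psi1 : state n),
           stabilizer_state psi0 -> stabilizer_state psi1 ->
           LU_equiv psi0 psi1 -> LC_equiv psi0 psi1)].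
Proof.
split; [exact: stab_S | exact: stab_QS | exact: LU | exact: not_LC |].
move=> H; apply: not_LC; apply: H; [exact: stab_S | exact: stab_QS | exact: LU].
Qed.
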